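(* Let $B$ be a set of memory blocks and $G=(V,E)$ a finite directed multigraph whose edges are labeled with elements of $B$. For any nodes $v_1, v_2 \in V$ and any path $\pi$ in $G$ from $v_1$ to $v_2$, there is a path $\pi'$ from $v_1$ to $v_2$, obtained from $\pi$ by removing sub-paths, such that the set of labels of the edges of $\pi'$ equals the set of labels of the edges of $\pi$, and $\pi'$ has at most $|V|\cdot|B|$ edges (hence, taking $B$ to be the set of labels actually used, at most $|V|\cdot|E|$ edges). *)

(* Defs.v *)
From mathcomp Require Import all_boot.
Set Implicit Arguments. Unset Strict Implicit. Unset Printing Implicit Defensive.

Section Paths.
Variables (V E : finType) (src tgt : E -> V).

Fixpoint is_path (v1 v2 : V) (p : seq E) : bool :=
  match p with
  | [::] => v1 == v2
  | e :: p' => (src e == v1) && is_path (tgt e) v2 p'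
  end.
End Paths.

Definition labels (E : finType) (B : finType) (lab : E -> B) (p : seq E) : {set B} :=
  [set lab e | e in p].

(* Main.v *)
Require Import Defs.
From mathcomp Require Import all_boot.
From mathcomp Require Import zify.

Set Implicit Arguments. Unset Strict Implicit.
Section Aux.
Variables (V E B : finType) (src tgt : E -> V) (lab : E -> B).

Lemma is_path_split v1 v2 s1 e s2 :
  is_path src tgt v1 v2 (s1 ++ e :: s2) ->
  is_path src tgt v1 (src e) s1 && is_path src tgt (tgt e) v2 s2.
Proof.
elim: s1 v1 => [|x s1 IH] v1 /=.
  by case/andP=> /eqP -> ->; rewrite eqxx.
by case/andP=> -> /IH.
Qed.

Lemma is_path_join v1 v2 s1 e s2 :
  is_path src tgt v1 (src e) s1 -> is_path src tgt (tgt e) v2 s2 ->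
  is_path src tgt v1 v2 (s1 ++ e :: s2).
Proof.
elim: s1 v1 => [|x s1 IH] v1 /=.
  by move=> /eqP <- ->; rewrite eqxx.
by case/andP=> -> /IH H /H.
Qed.

Lemma labels_cons e p : labels lab (e :: p) = lab e |: labels lab p.
Proof.
apply/setP=> b; rewrite !inE; apply/imsetP/orP.
  case=> x; rewrite inE => /orP [/eqP -> ->|xp ->]; first by left.
  by right; apply/imsetP; exists x.
case=> [/eqP ->|/imsetP [x xp ->]]; first by exists e; rewrite ?inE ?eqxx.
by exists x; rewrite // inE xp orbT.
Qed.

Lemma labels_cat p q : labels lab (p ++ q) = labels lab p :|: labels lab q.
Proof.
elim: p => [|e p IH] /=.
  have -> : labels lab [::] = set0.
    by apply/setP=> b; rewrite inE; apply/imsetP => -[].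
  by rewrite set0U.
by rewrite !labels_cons IH setUA.
Qed.

Lemma labels_sub p q : subseq p q -> labels lab p \subset labels lab q.
Proof.
move=> /mem_subseq H; apply/subsetP=> b /imsetP [x xp ->].
by apply/imsetP; exists x => //; apply: H.
Qed.

Lemma simple_path v1 v2 p : is_path src tgt v1 v2 p ->
  exists p', [/\ is_path src tgt v1 v2 p', subseq p' p &
                 uniq (v1 :: map tgt p')].
Proof.
elim: p v1 => [|e q IH] v1 /=.
  by move=> H; exists [::]; split => //; rewrite /= andbT.
case/andP=> /eqP se /IH [q' [Hq' sq' uq']].
set s := e :: q'.
have us : uniq (map tgt s) by [].
have ps : is_path src tgt v1 v2 s by rewrite /s /= se eqxx.
have ss : subseq s (e :: q) by rewrite /s /= eqxx.
case: (boolP (v1 \in map tgt s)) => [/mapP [e' e's ->]|nin].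
  move: e's ps ss us; case/splitPr => s1 s2 ps ss us.
  exists s2; split.
  - by case/andP: (is_path_split ps).
  - apply: subseq_trans ss.
    by rewrite -cat_rcons suffix_subseq.
  - by move: us; rewrite map_cat cat_uniq => /and3P [_ _].
by exists s; split => //; rewrite cons_uniq nin; exact: us.
Qed.

Lemma short_path v1 v2 p : is_path src tgt v1 v2 p ->
  exists p', [/\ is_path src tgt v1 v2 p', subseq p' p & size p' <= #|V|.-1].
Proof.
case/simple_path=> p' [H1 H2 H3]; exists p'; split => //.
have := max_card (mem (v1 :: map tgt p')).
by rewrite (card_uniqP H3) /= size_map; case: #|V|.
Qed.

Lemma gen_lemma n (S : {set B}) v1 v2 p : size p <= n ->
  is_path src tgt v1 v2 p ->
  exists p', [/\ is_path src tgt v1 v2 p', subseq p' p,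
     S :|: labels lab p' = S :|: labels lab p &
     size p' <= #|V| * #|labels lab p :\: S| + #|V|.-1].
Proof.
elim: n S v1 p => [|n IH] S v1 p.
  rewrite leqn0 => /nilP -> H; exists [::]; split => //; lia.
move=> sp H.
case: (boolP (has (fun e => lab e \notin S) p)) => [hp|hn].
  have [x0 _] : exists x0 : E, true by case: (p) hp => // e _; exists e.
  move: sp H; case: (split_find_nth x0 hp) => x s1 s2 px hs1.
  rewrite cat_rcons => sp /is_path_split /andP [P1 P2].
  have [q' [Q1 Q2 Q3]] := short_path P1.
  have sz : size s2 <= n by move: sp; rewrite size_cat /=; lia.
  have [r' [R1 R2 R3 R4]] := IH (lab x |: S) _ _ sz P2.
  exists (q' ++ x :: r'); split.
  - exact: is_path_join.
  - by apply: cat_subseq => //=; rewrite eqxx.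
  - have Hs1 : labels lab s1 \subset S.
      apply/subsetP=> b /imsetP [y ys ->].
      by apply: contraR hs1 => hy; apply/hasP; exists y.
    have Hq : labels lab q' \subset S := subset_trans (labels_sub Q2) Hs1.
    rewrite !labels_cat !labels_cons.
    apply/setP=> b; move/setP/(_ b): R3; rewrite !inE => R3b.
    move: R3b (subsetP Hq b) (subsetP Hs1 b).
    case: (b \in S); case: (b == lab x); case: (b \in labels lab q');
      case: (b \in labels lab s1); case: (b \in labels lab r');
      case: (b \in labels lab s2) => //= h3 h1 h2;
      first [ by case: (h1 isT) | by case: (h2 isT) | discriminate ].
  - rewrite size_cat /=.
    have -> : #|labels lab (s1 ++ x :: s2) :\: S| =
              #|labels lab s2 :\: (lab x |: S)|.+1.
      have Hs1 : labels lab s1 \subset S.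
        apply/subsetP=> b /imsetP [y ys ->].
        by apply: contraR hs1 => hy; apply/hasP; exists y.
      rewrite labels_cat labels_cons.
      have -> : (labels lab s1 :|: (lab x |: labels lab s2)) :\: S =
                lab x |: (labels lab s2 :\: (lab x |: S)).
        apply/setP=> b; rewrite !inE.
        move: (subsetP Hs1 b) px; rewrite /=.
        case: (b =P lab x) => [->|_] /=.
          by move=> _ ->; rewrite orbT.
        case: (b \in S); case: (b \in labels lab s1);
          case: (b \in labels lab s2) => //= h _; by case: (h isT).
      by rewrite cardsU1 !inE eqxx.
    have V0 : 0 < #|V| by apply/card_gt0P; exists v1.
    move: V0 Q3 R4; rewrite mulnS -!subn1; move: (#|V| * _) => a; move: #|V| => b; lia.
have [q' [Q1 Q2 Q3]] := short_path H.
have Hp : labels lab p \subset S.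
  apply/subsetP=> b /imsetP [y ys ->].
  by apply: contraR hn => hy; apply/hasP; exists y.
have Hq : labels lab q' \subset S := subset_trans (labels_sub Q2) Hp.
exists q'; split => //.
  by rewrite (setUidPl Hq) (setUidPl Hp).
exact: leq_trans Q3 (leq_addl _ _).
Qed.
End Aux.
Unset Implicit Arguments. Set Strict Implicit.

Theorem mainTheorem7 (V E B : finType) (src tgt : E -> V) (lab : E -> B)
    (v1 v2 : V) (p : seq E) :
  is_path src tgt v1 v2 p ->
  exists p' : seq E,
    [/\ is_path src tgt v1 v2 p', subseq p' p,
        labels lab p' = labels lab p
      & size p' <= #|V| * #|B|].
Proof.
case: p => [|e q] /=.
  by move=> H; exists [::]; split => //=; rewrite H.
case/andP=> /eqP se Hq.
have [q' [Q1 Q2 Q3 Q4]] := gen_lemma lab [set lab e] (leqnn (size q)) Hq.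
exists (e :: q'); split.
- by rewrite /= se eqxx.
- by rewrite /= eqxx.
- by rewrite !labels_cons Q3.
- have V0 : 0 < #|V| by apply/card_gt0P; exists v1.
  have Hm : #|labels lab q :\ lab e|.+1 <= #|B|.
    have := max_card (mem (lab e |: (labels lab q :\ lab e))).
    by rewrite cardsU1 !inE eqxx.
  have := leq_mul (leqnn #|V|) Hm.
  move: V0 Q4; rewrite /= mulnS -!subn1.
  move: (#|V| * _) (#|V| * #|B|) => a c; move: #|V| => b; lia.
Qed.
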